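(* Let $\mathcal{B}\subseteq\{1,2\}^3$ be a basic set with associated SNRE $F=\{F^{(a)},F^{(b)}\}$, sequences $(a_n),(b_n)$ and $S_2$-SFT $X^{\mathcal{B}}$. Suppose the symbol $1$ is a dominate symbol (i.e. $a_n\ge b_n$ for all $n\in\mathbb{N}$) and is essential (i.e. $a_n\ge2$ for some $n$). Then $F^{(a)}_1\neq y^2$. Furthermore: (1) if $F^{(a)}_1=x^2$, then $h(X^{\mathcal{B}})=\frac14\lim_{n\to\infty}\Big(\ln a_1+\sum_{j=1}^{n-1}2^{-j}\ln r^{(a)}_j\Big)$; (2) if $F^{(a)}_1=xy$ and $F^{(b)}_1=xy$, then $h(X^{\mathcal{B}})=\frac14\lim_{n\to\infty}\Big((\widehat v_1)^{[1]}+\sum_{j=1}^{n-1}2^{-j}(\ln\widehat r_j)^{[1]}\Big)$, where $\widehat v_1=R^{-1}v_1$, $\ln\widehat r_j=R^{-1}\ln r_j$; (3) if $F^{(a)}_1=xy$ and $F^{(b)}_1=y^2$, then $|B_n(X^{\mathcal{B}})|$ grows at most exponentially in $n$ (there is $c>0$ with $\ln|B_n(X^{\mathcal{B}})|\le cn$ for all $n$), and $h(X^{\mathcal{B}})=0$.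
   Context: $S_2$ is the free semigroup on two generators, identified with finite words over $\{1,2\}$ (root $\epsilon$). Alphabet $\mathcal{A}=\{1,2\}$; a basic set $\mathcal{B}\subseteq\mathcal{A}^3$ is a set of admissible 2-blocks $(i,i_1,i_2)$, $X^{\mathcal{B}}$ the associated $S_2$-SFT. $B_n(X^{\mathcal{B}})$ is the set of maps $u$ from words of length $\le n$ to $\mathcal{A}$ with $(u(w),u(w1),u(w2))\in\mathcal{B}$ for all words $w$ of length $\le n-1$; $a_n$, $b_n$ count those with $u(\epsilon)=1$, resp. $2$, so $|B_n(X^{\mathcal{B}})|=a_n+b_n$. The SNRE is $F^{(a)}(x,y)=\sum_{(1,i,j)\in\mathcal{B}}z_iz_j$, $F^{(b)}(x,y)=\sum_{(2,i,j)\in\mathcal{B}}z_iz_j$ ($z_1=x,z_2=y$), with $a_0=b_0=1$, $a_n=F^{(a)}(a_{n-1},b_{n-1})$, $b_n=F^{(b)}(a_{n-1},b_{n-1})$. Entropy: $h(X^{\mathcal{B}})=\limsup_{n}\frac{\ln(a_n+b_n)}{2^{n+1}-1}$ (known to be a limit). For $*\in\{a,b\}$, $F^{( * )}_1$ denotes the monomial (with coefficient $1$) among $x^2,xy,y^2$ occurring in $F^{( * )}$ with nonzero coefficient and with the highest power of $x$; and $r^{( * )}_j=F^{( * )}(a_j,b_j)/F^{( * )}_1(a_j,b_j)$. Let $v_1=(\ln a_1,\ln b_1)^T$, $\ln r_j=(\ln r^{(a)}_j,\ln r^{(b)}_j)^T$, $w^{[1]}$ the first entry of a vector $w$, and let $R$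 be an invertible $2\times2$ matrix with $R_{11}=1$ such that $\begin{pmatrix}1&1\\1&1\end{pmatrix}=R\begin{pmatrix}2&0\\0&0\end{pmatrix}R^{-1}$. *)

(* Defs.v *)
From HB Require Import structures.
From mathcomp Require Import all_boot all_order all_algebra.
From mathcomp Require Import all_classical all_reals all_analysis.
Set Implicit Arguments. Unset Strict Implicit. Unset Printing Implicit Defensive.
Import Order.TTheory GRing.Theory Num.Theory.
Local Open Scope ring_scope.

(* Alphabet A = {1,2}: symbol 1 is ord0, symbol 2 is ord_max in 'I_2. *)
Notation symb := 'I_2.
Definition s1 : symb := ord0.
Definition s2 : symb := ord_max.

(* A basic set: a set of admissible 2-blocks (i, i1, i2). *)
Notation basic_set := {set symb * symb * symb}.

Definition zvar (x y : nat) (i : symb) : nat := if i == s1 then x else y.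

(* F^(s)(x,y) = sum_{(s,i,j) in B} z_i z_j  (s = s1 gives F^(a), s = s2 gives F^(b)) *)
Definition Fpol (B : basic_set) (s : symb) (x y : nat) : nat :=
  \sum_(i < 2) \sum_(j < 2) ((s, i, j) \in B) * (zvar x y i * zvar x y j).

Fixpoint ab (B : basic_set) (n : nat) : nat * nat :=
  match n with
  | 0 => (1, 1)
  | m.+1 => let p := ab B m in (Fpol B s1 p.1 p.2, Fpol B s2 p.1 p.2)
  end.
Definition seqa B n := (ab B n).1.
Definition seqb B n := (ab B n).2.

(* |B_n(X^B)| = a_n + b_n *)
Definition cardBn B n := (seqa B n + seqb B n)%N.

Definition entropy (R : realType) (B : basic_set) : \bar R :=
  limn_esup (fun n => (ln ((cardBn B n)%:R : R) / (2 ^+ n.+1 - 1))%:E).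

Inductive monom := MX2 | MXY | MY2.

(* F_1^(s): the monomial with nonzero coefficient in F^(s) having the highest
   power of x (None if F^(s) = 0). *)
Definition F1 (B : basic_set) (s : symb) : option monom :=
  if (s, s1, s1) \in B then Some MX2
  else if ((s, s1, s2) \in B) || ((s, s2, s1) \in B) then Some MXY
  else if (s, s2, s2) \in B then Some MY2
  else None.

Definition monom_eval (m : monom) (x y : nat) : nat :=
  match m with MX2 => (x * x)%N | MXY => (x * y)%N | MY2 => (y * y)%N end.

Definition F1_eval (B : basic_set) (s : symb) (x y : nat) : nat :=
  match F1 B s with Some m => monom_eval m x y | None => 0%N end.

Definition rseq (R : realType) (B : basic_set) (s : symb) (j : nat) : R :=
  (Fpol B s (seqa B j) (seqb B j))%:R / (F1_eval B s (seqa B j) (seqb B j))%:R.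

Definition v1 (R : realType) (B : basic_set) : 'cV[R]_2 :=
  \col_(i < 2) (if i == s1 then ln ((seqa B 1)%:R : R) else ln ((seqb B 1)%:R : R)).
Definition lnr (R : realType) (B : basic_set) (j : nat) : 'cV[R]_2 :=
  \col_(i < 2) ln (rseq R B i j).

(* Main.v *)
Require Import Defs.
From HB Require Import structures.
From mathcomp Require Import all_boot all_order all_algebra.
From mathcomp Require Import all_classical all_reals all_analysis.
From mathcomp Require Import zify ring lra.
Import Order.TTheory GRing.Theory Num.Theory.
Import numFieldNormedType.Exports.
Local Open Scope classical_set_scope.
Local Open Scope ring_scope.

Definition cB (B : basic_set) s i j : nat := ((s, i, j) \in B).

Lemma Fpol_E B s x y : Fpol B s x y =
  (cB B s s1 s1 * (x * x) + cB B s s1 s2 * (x * y) + cB B s s2 s1 * (y * x)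
   + cB B s s2 s2 * (y * y))%N.
Proof. have E : lift ord0 ord0 = s2 :> symb by apply/val_inj.
rewrite /Fpol !big_ord_recl !big_ord0 E /zvar /= /cB.
by rewrite /s1 !addn0 !addnA. Qed.

Lemma cB_le1 B s i j : (cB B s i j <= 1)%N.
Proof. by rewrite /cB; case: (_ \in _). Qed.

Lemma seqaS B n : seqa B n.+1 = Fpol B s1 (seqa B n) (seqb B n).
Proof. by []. Qed.
Lemma seqbS B n : seqb B n.+1 = Fpol B s2 (seqa B n) (seqb B n).
Proof. by []. Qed.

Lemma F1_X2 B s : F1 B s = Some MX2 -> cB B s s1 s1 = 1%N.
Proof. by rewrite /F1 /cB; case: ((s,s1,s1) \in B) => //=; case: ifP => //; case: ifP. Qed.

Lemma F1_XY B s : F1 B s = Some MXY ->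
  cB B s s1 s1 = 0%N /\ (1 <= cB B s s1 s2 + cB B s s2 s1)%N.
Proof.
rewrite /F1 /cB; case: ((s,s1,s1) \in B) => //=.
by case: ((s,s1,s2) \in B); case: ((s,s2,s1) \in B) => //=; case: ifP.
Qed.

Lemma F1_Y2 B s : F1 B s = Some MY2 ->
  [/\ cB B s s1 s1 = 0%N, cB B s s1 s2 = 0%N, cB B s s2 s1 = 0%N & cB B s s2 s2 = 1%N].
Proof.
rewrite /F1 /cB; case: ((s,s1,s1) \in B) => //=.
by case: ((s,s1,s2) \in B); case: ((s,s2,s1) \in B) => //=; case: ((s,s2,s2) \in B).
Qed.

Lemma part0 B : (forall n, (seqb B n <= seqa B n)%N) -> (exists n, (2 <= seqa B n)%N) ->
  F1 B s1 <> Some MY2.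
Proof.
move=> dom [n hn] /F1_Y2 [h1 h2 h3 h4].
suff: forall n, (seqa B n <= 1)%N by move/(_ n); lia.
elim => [//|m IH]; rewrite seqaS Fpol_E h1 h2 h3 h4; have := dom m; nia.
Qed.

Lemma case1_nat B : (forall n, (seqb B n <= seqa B n)%N) -> F1 B s1 = Some MX2 ->
  forall n, (1 <= seqa B n)%N /\ (seqa B n * seqa B n <= seqa B n.+1 <= 4 * (seqa B n * seqa B n))%N.
Proof.
move=> dom /F1_X2 h1.
have pos : forall n, (1 <= seqa B n)%N.
  elim => [//|m IH]; rewrite seqaS Fpol_E h1; nia.
move=> n; split => //; rewrite seqaS Fpol_E h1.
have := dom n; have := cB_le1 B s1 s1 s2; have := cB_le1 B s1 s2 s1;
  have := cB_le1 B s1 s2 s2.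
  have h2 : (seqa B n * seqb B n <= seqa B n * seqa B n)%N by have := dom n; nia.
  have h3 : (seqb B n * seqb B n <= seqa B n * seqa B n)%N by have := dom n; nia.
  rewrite [(seqb B n * seqa B n)%N]mulnC; move: h2 h3.
  move: (seqa B n * seqb B n)%N (seqb B n * seqb B n)%N (seqa B n * seqa B n)%N => p q r; nia.
Qed.

Lemma case2_nat B : (forall n, (seqb B n <= seqa B n)%N) -> F1 B s1 = Some MXY ->
  F1 B s2 = Some MXY ->
  forall n, (1 <= seqa B n)%N /\ (1 <= seqb B n)%N /\
   (seqa B n * seqb B n <= seqa B n.+1 <= 3 * (seqa B n * seqb B n))%N /\
   (seqa B n * seqb B n <= seqb B n.+1 <= 3 * (seqa B n * seqb B n))%N.
Proof.
move=> dom /F1_XY [h1 h1'] /F1_XY [h2 h2'].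
have pos : forall n, (1 <= seqa B n)%N /\ (1 <= seqb B n)%N.
  elim => [//|m [IH1 IH2]]; rewrite seqaS seqbS !Fpol_E h1 h2 [(seqb B m * seqa B m)%N]mulnC.
  have : (1 <= seqa B m * seqb B m)%N by nia.
  move: (seqa B m * seqb B m)%N => p hp; split; nia.
move=> n; have [p1 p2] := pos n; do 2! split => //; rewrite seqaS seqbS !Fpol_E h1 h2.
have := dom n; have := cB_le1 B s1 s1 s2; have := cB_le1 B s1 s2 s1;
  have := cB_le1 B s1 s2 s2; have := cB_le1 B s2 s1 s2; have := cB_le1 B s2 s2 s1;
  have := cB_le1 B s2 s2 s2; rewrite [(seqb B n * seqa B n)%N]mulnC.
  have : (seqb B n * seqb B n <= seqa B n * seqb B n)%N by have := dom n; nia.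
  move: (seqa B n * seqb B n)%N (seqb B n * seqb B n)%N => p q; split; nia.
Qed.

Lemma case3_nat B : F1 B s1 = Some MXY -> F1 B s2 = Some MY2 ->
  forall n, seqb B n = 1%N /\ (seqa B n + 1 <= 2 ^ n.+1)%N.
Proof.
move=> /F1_XY [h1 _] /F1_Y2 [g1 g2 g3 g4].
elim => [//|m [IH1 IH2]]; rewrite seqaS seqbS !Fpol_E h1 g1 g2 g3 g4 IH1.
split; first by [].
have := cB_le1 B s1 s1 s2; have := cB_le1 B s1 s2 s1; have := cB_le1 B s1 s2 s2.
rewrite expnS; nia.
Qed.

Lemma esup_of_cvg (R : realType) (u : nat -> R) l : u @ \oo --> l ->
  limn_esup (fun n => (u n)%:E) = l%:E.
Proof.
move=> ul; have H : (fun n => (u n)%:E) @ \oo --> l%:E.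
  by apply: cvg_EFin => //; near=> n.
by have [_ ->] := cvg_limn_einf_sup H.
Unshelve. all: by end_near.
Qed.

Lemma cvg_err (R : realType) (u T : nat -> R) (C l : R) :
  (forall n, `|u n - T n| <= C * n.+1%:R^-1) -> T @ \oo --> l -> u @ \oo --> l.
Proof.
move=> hb hT.
have h0 : (fun n => C * n.+1%:R^-1) @ \oo --> (0:R).
  have hh : (@harmonic R) @ \oo --> (0:R) := cvg_harmonic.
  rewrite -(mulr0 C); exact: (cvgM (cvg_cst C) hh).
have hN : (fun n => - (C * n.+1%:R^-1)) @ \oo --> (0:R).
  by rewrite -oppr0; apply: cvgN.
have hg : (fun n => u n - T n) @ \oo --> (0:R).
  apply: (squeeze_cvgr _ hN h0); near=> n; rewrite -ler_norml; exact: hb.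
have E : u = (fun n => u n - T n) + T by apply/funext => n /=; rewrite subrK.
rewrite E -[l]add0r; exact: cvgD hg hT.
Unshelve. all: by end_near.
Qed.

Lemma gen (R : realType) (P c : nat -> R) (K α : R) :
  (forall n, 0 <= P n.+1 - 2 * P n <= K) -> (forall n, `|c n - α * P n| <= K) ->
  exists L', (fun n => P n / 2 ^+ n) @ \oo --> L' /\
   limn_esup (fun n => (c n / (2 ^+ n.+1 - 1))%:E) = (α * L' / 2)%:E.
Proof.
move=> hP hc.
have K0 : 0 <= K by have /andP[a b] := hP 0%N; exact: le_trans a b.
set Q := fun n => P n / 2 ^+ n.
have p2 : forall n, 0 < (2:R) ^+ n by move=> n; apply: exprn_gt0.
have p2' : forall n, (2:R) ^+ n != 0 by move=> n; rewrite gt_eqF.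
have QS : forall n, Q n.+1 = Q n + (P n.+1 - 2 * P n) / 2 ^+ n.+1.
  move=> n; rewrite /Q exprS; have := p2' n; move: (2 ^+ n) => t t0; by field.
have Qnd : nondecreasing_seq Q.
  apply/nondecreasing_seqP => n; rewrite QS lerDl; apply: divr_ge0; last exact: ltW.
  by case/andP: (hP n).
have Qub : forall n, Q n <= Q 0%N + K - K / 2 ^+ n.
  elim => [|n IH]; first by rewrite expr0 divr1 addrK.
  rewrite QS.
  have h1 : (P n.+1 - 2 * P n) / 2 ^+ n.+1 <= K / 2 ^+ n.+1.
    by rewrite ler_pM2r ?invr_gt0 //; case/andP: (hP n).
  have e : K / 2 ^+ n = 2 * (K / 2 ^+ n.+1).
    rewrite exprS; have := p2' n; move: (2 ^+ n) => t t0; by field.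
  lra.
have Qge : forall n, Q 0%N <= Q n by move=> n; apply: Qnd.
have Qle : forall n, Q n <= Q 0%N + K.
  move=> n; apply: (le_trans (Qub n)); rewrite lerBlDr lerDl divr_ge0 // ltW //.
have Qb : forall n, `|Q n| <= `|Q 0%N| + K.
  move=> n; have h1 := ler_norm (Q 0%N); have h2 := ler_norm (- Q 0%N).
  rewrite normrN in h2; have := Qge n; have := Qle n.
  rewrite ler_norml; move=> a b; apply/andP; split; lra.
have HQ : Q @ \oo --> sup (range Q).
  apply: nondecreasing_cvgn => //; exists (Q 0%N + K) => _ [n _ <-]; exact: Qle.
exists (sup (range Q)); split; first exact: HQ.
apply: esup_of_cvg.
apply: (@cvg_err R _ (fun n => α * Q n / 2) (K + `|α| * (`|Q 0%N| + K))); last first.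
  have H1 := cvgM (cvgM (cvg_cst α) HQ) (cvg_cst (2:R)^-1).
  by apply: H1; typeclasses eauto.
move=> n.
set C := K + `|α| * (`|Q 0%N| + K).
have C0 : 0 <= C by apply: addr_ge0 => //; apply: mulr_ge0 => //; apply: addr_ge0.
have D1 : n.+1%:R <= (2:R) ^+ n.+1 - 1.
  have h : (n.+2 <= 2 ^ n.+1)%N by apply: ltn_expl.
  have : (n.+2%:R : R) <= 2 ^+ n.+1 by rewrite -natrX ler_nat.
  rewrite -addn1 natrD; lra.
have Dp : 0 < (2:R) ^+ n.+1 - 1 by apply: lt_le_trans D1; rewrite ltr0n.
have E : c n / (2 ^+ n.+1 - 1) - α * Q n / 2 =
         ((c n - α * P n) + α * Q n / 2) / (2 ^+ n.+1 - 1).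
  move: Dp; rewrite /Q exprS; have := p2' n; move: (2 ^+ n) => t t0 Dp.
  by field; rewrite gt_eqF.
rewrite E normrM normfV (gtr0_norm Dp).
have h1 : `|c n - α * P n + α * Q n / 2| <= C.
  apply: le_trans (ler_normD _ _) _; apply: lerD (hc n) _.
  rewrite -mulrA normrM; apply: ler_wpM2l => //.
  rewrite normrM normfV (@ger0_norm _ 2) //; have := Qb n; have := normr_ge0 (Q n); lra.
rewrite ler_pdivrMr //.
have e2 : C / n.+1%:R * (2 ^+ n.+1 - 1) = C * ((2 ^+ n.+1 - 1) / n.+1%:R).
  by rewrite mulrAC -mulrA.
have e3 : 1 <= (2 ^+ n.+1 - 1) / (n.+1%:R : R) by rewrite ler_pdivlMr ?ltr0n // mul1r.
rewrite e2; move: e3 h1; move: ((2 ^+ n.+1 - 1) / (n.+1%:R : R)) => t; nra.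
Qed.

Lemma lnnM (R : realType) (x y : nat) : (0 < x)%N -> (0 < y)%N ->
  ln ((x * y)%N%:R : R) = ln x%:R + ln y%:R.
Proof. by move=> hx hy; rewrite natrM lnM // posrE ltr0n. Qed.

Lemma lnn_le (R : realType) (x y : nat) : (0 < x)%N -> (x <= y)%N ->
  ln (x%:R : R) <= ln y%:R.
Proof. by move=> hx hy; rewrite ler_ln ?posrE ?ltr0n ?ler_nat //; apply: leq_trans hy. Qed.

Lemma lnn_ge0 (R : realType) (x : nat) : (0 < x)%N -> 0 <= ln (x%:R : R).
Proof. by move=> hx; apply: ln_ge0; rewrite ler1n. Qed.

Lemma shift_cvg (R : realType) (S Q : nat -> R) (k L : R) :
  (forall n, S n.+1 = k * Q n.+1) -> Q @ \oo --> L -> S @ \oo --> k * L.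
Proof.
move=> h hQ; rewrite -(cvg_shiftS S).
have hQ' : [sequence Q n.+1]_n @ \oo --> L by rewrite (cvg_shiftS Q).
have E : [sequence S n.+1]_n = (fun=> k) \* [sequence Q n.+1]_n.
  by apply/funext => n /=; rewrite h.
rewrite E; have H := cvgM (cvg_cst k) hQ'; by apply: H; typeclasses eauto.
Qed.

Lemma Rinv_row (R : realType) (Rm : 'M[R]_2) :
  Rm \in unitmx -> Rm ord0 ord0 = 1 ->
  const_mx 1 = Rm *m diag_mx (\row_(i < 2) (if i == s1 then 2%:R else 0)) *m invmx Rm ->
  forall u : 'cV[R]_2, (invmx Rm *m u) ord0 ord0 = (u ord0 ord0 + u ord_max ord0) / 2.
Proof.
set D := diag_mx _ => hu h00 hM u.
have E1 : const_mx 1 *m Rm = Rm *m D by rewrite hM mulmxKV.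
have E2 : invmx Rm *m const_mx 1 = D *m invmx Rm by rewrite hM !mulmxA mulVmx // mul1mx.
have E3 : invmx Rm *m Rm = 1%:M by rewrite mulVmx.
have L : lift ord0 ord0 = ord_max :> 'I_2 by apply/val_inj.
have a := congr1 (fun M : 'M[R]_2 => M ord_max ord0) E1.
have b := congr1 (fun M : 'M[R]_2 => M ord0 ord0) E2.
have b' := congr1 (fun M : 'M[R]_2 => M ord0 ord_max) E2.
have d := congr1 (fun M : 'M[R]_2 => M ord0 ord0) E3.
move: a b b' d; rewrite /D !mxE !big_ord_recl !big_ord0 !L !mxE /=.
rewrite h00 !mulr1n !mulr0n !mul0r !mulr0 !mul1r !mulr1 !addr0 => a b b' d.
have r10 : Rm ord_max ord0 = 1 by lra.
rewrite r10 mulr1 in d.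
have n0 : invmx Rm ord0 ord0 = 1/2 by lra.
have n1 : invmx Rm ord0 ord_max = 1/2 by lra.
by rewrite n0 n1; field.
Qed.

Lemma ln_rseq (R : realType) B s j :
  (0 < F1_eval B s (seqa B j) (seqb B j))%N -> (0 < Fpol B s (seqa B j) (seqb B j))%N ->
  ln (rseq R B s j) = ln (Fpol B s (seqa B j) (seqb B j))%:R
                      - ln (F1_eval B s (seqa B j) (seqb B j))%:R.
Proof. by move=> h1 h2; rewrite /rseq ln_div // posrE ltr0n. Qed.

Lemma pos_of m n : (m <= n)%N -> (0 < m)%N -> (0 < n)%N.
Proof. by move=> h1 h2; apply: leq_trans h2 h1. Qed.

Lemma case1 (R : realType) B : (forall n, (seqb B n <= seqa B n)%N) ->
  F1 B s1 = Some MX2 ->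
     exists L : R,
       (fun n : nat => ln ((seqa B 1)%:R : R) +
          \sum_(1 <= j < n) (2%:R ^- j) * ln (rseq R B s1 j)) @ \oo --> L /\
       entropy R B = (L / 4%:R)%:E.
Proof.
move=> dom h.
have N := case1_nat B dom h.
have l2 : 0 <= ln (2%:R : R) by apply: lnn_ge0.
have l4 : ln (4%:R : R) = 2 * ln 2%:R.
  by rewrite -[4%N]/(2 * 2)%N lnnM // mulr2n mulrDl mul1r.
have hP : forall n : nat, 0 <= ln ((seqa B n.+1)%:R : R) - 2 * ln ((seqa B n)%:R : R) <= ln (4%:R : R).
  move=> n; have [p /andP[q1 q2]] := N n.
  have e : 2 * ln (seqa B n)%:R = ln ((seqa B n * seqa B n)%N%:R : R) :> R.
    by rewrite lnnM // mulr2n mulrDl mul1r.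
  have i1 : ln ((seqa B n * seqa B n)%N%:R : R) <= ln ((seqa B n.+1)%:R : R).
    by apply: lnn_le q1; rewrite muln_gt0 p.
  have i2 : ln ((seqa B n.+1)%:R : R) <= ln ((4 * (seqa B n * seqa B n))%N%:R : R).
    by apply: lnn_le q2; apply: (@pos_of _ _ q1); rewrite muln_gt0 p.
  rewrite lnnM ?muln_gt0 ?p // in i2.
  rewrite e; apply/andP; split; lra.
have hc : forall n : nat, `|ln ((cardBn B n)%:R : R) - 1 * ln ((seqa B n)%:R : R)| <= ln (4%:R : R).
  move=> n; have [p _] := N n; rewrite mul1r.
  have i1 : ln (seqa B n)%:R <= ln (cardBn B n)%:R :> R.
    by apply: lnn_le => //; rewrite /cardBn leq_addr.
  have i2 : ln (cardBn B n)%:R <= ln ((2 * seqa B n)%N%:R) :> R.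
    by apply: lnn_le; rewrite /cardBn ?addn_gt0 ?p //; have := dom n; lia.
  rewrite lnnM // in i2; rewrite ler_norml; apply/andP; split; lra.
have [L' [HQ He]] := gen R _ _ _ _ hP hc.
exists (2 * L'); split; last by rewrite /entropy He; congr EFin; field.
apply: shift_cvg HQ => n.
have pos := fun m => (N m).1.
elim: n => [|n IH].
  by rewrite big_geq // addr0 expr1; field.
rewrite big_nat_recr //= addrA IH.
rewrite ln_rseq; last first.
- by rewrite -seqaS pos.
- by rewrite /F1_eval h /= muln_gt0 pos.
rewrite -seqaS /F1_eval h /= lnnM ?pos //.
rewrite !exprS; have : (2:R) ^+ n != 0 by rewrite expf_neq0.
move: (2 ^+ n) => t t0; by field.
Qed.

Lemma case2 (R : realType) B : (forall n, (seqb B n <= seqa B n)%N) ->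
  F1 B s1 = Some MXY -> F1 B s2 = Some MXY ->
     forall Rm : 'M[R]_2,
       Rm \in unitmx -> Rm ord0 ord0 = 1 ->
       const_mx 1 = Rm *m diag_mx (\row_(i < 2) (if i == s1 then 2%:R else 0)) *m invmx Rm ->
     exists L : R,
       (fun n : nat => (invmx Rm *m v1 R B) ord0 ord0 +
          \sum_(1 <= j < n) (2%:R ^- j) * (invmx Rm *m lnr R B j) ord0 ord0) @ \oo --> L /\
       entropy R B = (L / 4%:R)%:E.
Proof.
move=> dom h1 h2 Rm hu h00 hM.
have N := case2_nat B dom h1 h2.
have l2 : 0 <= ln (2%:R : R) by apply: lnn_ge0.
have l3 : 0 <= ln (3%:R : R) by apply: lnn_ge0.
have l6 : ln (6%:R : R) = ln 2%:R + ln 3%:R by rewrite -[6%N]/(2 * 3)%N lnnM.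
have l18 : ln (18%:R : R) = ln 2%:R + 2 * ln 3%:R.
  by rewrite -[18%N]/(2 * (3 * 3))%N !lnnM // mulr2n mulrDl mul1r.
pose P := fun n => ln ((seqa B n)%:R : R) + ln ((seqb B n)%:R : R).
have Pab : forall n, P n = ln ((seqa B n * seqb B n)%N%:R : R).
  by move=> n; have [p [q _]] := N n; rewrite lnnM.
have bnd : forall n, ln ((seqa B n * seqb B n)%N%:R : R) <= ln ((seqa B n.+1)%:R : R) <=
   ln ((seqa B n * seqb B n)%N%:R : R) + ln (3%:R : R) /\
   ln ((seqa B n * seqb B n)%N%:R : R) <= ln ((seqb B n.+1)%:R : R) <=
   ln ((seqa B n * seqb B n)%N%:R : R) + ln (3%:R : R) /\
   ln ((seqa B n * seqb B n)%N%:R : R) <= ln ((cardBn B n.+1)%:R : R) <=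
   ln ((seqa B n * seqb B n)%N%:R : R) + ln (6%:R : R).
  move=> n; have [p [q [/andP[r1 r2] /andP[r3 r4]]]] := N n.
  have ab : (0 < seqa B n * seqb B n)%N by rewrite muln_gt0 p q.
  rewrite -(lnnM R _ 3 ab isT) -(lnnM R _ 6 ab isT).
  rewrite [(3 * _)%N]mulnC in r2 r4.
  split; [|split]; apply/andP; split; apply: lnn_le => //;
    try (by apply: leq_trans ab r1); try (by apply: leq_trans ab r3);
    rewrite /cardBn; lia.
have hP : forall n : nat, 0 <= P n.+1 - 2 * P n <= ln (18%:R : R).
  move=> n; have [/andP[a1 a2] [/andP[b1 b2] _]] := bnd n.
  rewrite /P -/(P n) Pab; apply/andP; split; lra.
have hc : forall n : nat, `|ln ((cardBn B n)%:R : R) - 2^-1 * P n| <= ln (18%:R : R).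
  case=> [|n].
    rewrite /P /cardBn /seqa /seqb /= ln1 addr0 mulr0 subr0 ger0_norm //.
    lra.
  have [/andP[a1 a2] [/andP[b1 b2] /andP[c1 c2]]] := bnd n.
  rewrite /P; rewrite ler_norml; apply/andP; split; lra.
have [L' [HQ He]] := gen R _ _ _ _ hP hc.
exists (1 * L'); split; last by rewrite /entropy He; congr EFin; field.
apply: shift_cvg HQ => n.
have rr := @Rinv_row R Rm hu h00 hM.
have f1 : forall x y, F1_eval B s1 x y = (x * y)%N by move=> x y; rewrite /F1_eval h1.
have f2 : forall x y, F1_eval B s2 x y = (x * y)%N by move=> x y; rewrite /F1_eval h2.
have ea : forall j, ln (rseq R B ord0 j) = P j.+1 - 2 * P j - ln ((seqb B j.+1)%:R : R) + ln ((seqa B j)%:R : R) + ln ((seqb B j)%:R : R).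
  move=> j; have [p [q [/andP[r1 _] _]]] := N j.
  change (ln (rseq R B s1 j) = P j.+1 - 2 * P j - ln ((seqb B j.+1)%:R : R) + ln ((seqa B j)%:R : R) + ln ((seqb B j)%:R : R)).
  rewrite ln_rseq ?f1 ?muln_gt0 ?p ?q // ?lnnM //; last by rewrite -seqaS; apply: (@pos_of _ _ r1); rewrite muln_gt0 p q.
  by rewrite -seqaS /P; lra.
have eb : forall j, ln (rseq R B ord_max j) = ln ((seqb B j.+1)%:R : R) - ln ((seqa B j)%:R : R) - ln ((seqb B j)%:R : R).
  move=> j; have [p [q [_ /andP[r1 _]]]] := N j.
  change (ln (rseq R B s2 j) = ln ((seqb B j.+1)%:R : R) - ln ((seqa B j)%:R : R) - ln ((seqb B j)%:R : R)).
  rewrite ln_rseq ?f2 ?muln_gt0 ?p ?q // ?lnnM //; last by rewrite -seqbS; apply: (@pos_of _ _ r1); rewrite muln_gt0 p q.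
  by rewrite -seqbS; lra.
rewrite rr; under eq_bigr => j _ do rewrite rr !mxE ea eb.
rewrite !mxE /= mul1r.
elim: n => [|n IH].
  by rewrite big_geq // addr0 expr1.
rewrite big_nat_recr //= addrA IH.
rewrite !exprS; have : (2:R) ^+ n != 0 by rewrite expf_neq0.
move: (2 ^+ n) => t t0; by field.
Qed.

Lemma sq_le_pow n : (n.+1 * n.+1 + 4 <= 4 * 2 ^ n.+1)%N.
Proof. elim: n => [//|n IH]; rewrite expnS; nia. Qed.

Lemma case3 (R : realType) B :
  F1 B s1 = Some MXY -> F1 B s2 = Some MY2 ->
     (exists c : R, 0 < c /\
        forall n : nat, (1 <= n)%N -> ln ((cardBn B n)%:R : R) <= c * n%:R) /\
     entropy R B = 0%:E.
Proof.
move=> h1 h2; have N := case3_nat B h1 h2.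
have l2 : 0 < ln (2%:R : R) by apply: ln_gt0; rewrite ltr1n.
have cp : forall n, (0 < cardBn B n)%N by move=> n; rewrite /cardBn (N n).1 addn1.
have cle : forall n, ln ((cardBn B n)%:R : R) <= n.+1%:R * ln 2%:R.
  move=> n; have [e1 e2] := N n.
  have : ln ((cardBn B n)%:R : R) <= ln ((2 ^ n.+1)%N%:R : R).
    by apply: lnn_le => //; rewrite /cardBn e1.
  by rewrite natrX lnXn ?ltr0n // mulr_natl.
split.
  exists (2 * ln 2%:R); split; first by rewrite mulr_gt0.
  move=> n hn; apply: (le_trans (cle n)).
  have : (1 : R) <= n%:R by rewrite ler1n.
  rewrite -addn1 natrD; nra.
rewrite /entropy; apply: esup_of_cvg.
apply: (@cvg_err R _ (fun=> 0) (4 * ln 2%:R)); last exact: cvg_cst.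
move=> n; rewrite subr0.
have D1 : (n.+1%:R * n.+1%:R + 4 : R) <= 4 * 2 ^+ n.+1.
  by rewrite -natrM -natrX -[4 : R]/(4%N%:R) -natrD -natrM ler_nat sq_le_pow.
have Dp : (0 : R) < 2 ^+ n.+1 - 1.
  have : (1 : R) <= n.+1%:R * n.+1%:R by rewrite -natrM ler1n.
  lra.
have c0 := lnn_ge0 R _ (cp n).
rewrite ger0_norm; last by rewrite divr_ge0 // ltW.
rewrite ler_pdivrMr //.
have e2 : 4 * ln 2%:R / n.+1%:R * (2 ^+ n.+1 - 1) = ln (2%:R : R) * (4 * (2 ^+ n.+1 - 1) / n.+1%:R).
  by rewrite mulrAC [4 * _]mulrC -!mulrA.
have e3 : (n.+1%:R : R) <= 4 * (2 ^+ n.+1 - 1) / n.+1%:R.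
  rewrite ler_pdivlMr ?ltr0n //; lra.
rewrite e2; have := cle n; move: e3; move: (4 * (2 ^+ n.+1 - 1) / n.+1%:R) => t.
move=> e3 e4; nra.
Qed.

Theorem proposition3 (R : realType) (B : basic_set) :
  (forall n, (seqb B n <= seqa B n)%N) ->
  (exists n, (2 <= seqa B n)%N) ->
  F1 B s1 <> Some MY2 /\
  (F1 B s1 = Some MX2 ->
     exists L : R,
       (fun n : nat => ln ((seqa B 1)%:R : R) +
          \sum_(1 <= j < n) (2%:R ^- j) * ln (rseq R B s1 j)) @ \oo --> L /\
       entropy R B = (L / 4%:R)%:E) /\
  (F1 B s1 = Some MXY -> F1 B s2 = Some MXY ->
     forall Rm : 'M[R]_2,
       Rm \in unitmx -> Rm ord0 ord0 = 1 ->
       const_mx 1 = Rm *m diag_mx (\row_(i < 2) (if i == s1 then 2%:R else 0)) *m invmx Rm ->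
     exists L : R,
       (fun n : nat => (invmx Rm *m v1 R B) ord0 ord0 +
          \sum_(1 <= j < n) (2%:R ^- j) * (invmx Rm *m lnr R B j) ord0 ord0) @ \oo --> L /\
       entropy R B = (L / 4%:R)%:E) /\
  (F1 B s1 = Some MXY -> F1 B s2 = Some MY2 ->
     (exists c : R, 0 < c /\
        forall n : nat, (1 <= n)%N -> ln ((cardBn B n)%:R : R) <= c * n%:R) /\
     entropy R B = 0%:E).
Proof.
move=> dom ess; split; first exact: part0 dom ess.
split; first exact: case1 dom.
split; first exact: case2 dom.
exact: case3.
Qed.
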